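(* Let $f:\{0,1\}^r\to\{0,1\}$ satisfy $f(0,\dots,0)=1$. If $f$ contains $\mathrm{IMPL}$ as a restriction, then $f$ contains $\mathrm{IMPL}$ as a $0$-restriction.
   Context: $g:\{0,1\}^s\to\{0,1\}$ is a restriction of $f$ if there are pairwise disjoint, possibly empty, sets $X_1,\dots,X_s,Z_0,Z_1$ with union $[r]$ such that $g(x_1,\dots,x_s)=f(u)$. Here $u_i=x_j$ for $i\in X_j$, $u_i=0$ for $i\in Z_0$, and $u_i=1$ for $i\in Z_1$. It is a $0$-restriction if this holds with $Z_1=\emptyset$. $\mathrm{IMPL}(y_1,y_2)=\overline{y_1}\vee y_2$. *)

(* Defs.v *)
From mathcomp Require Import all_boot.
Set Implicit Arguments. Unset Strict Implicit. Unset Printing Implicit Defensive.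

Definition boolfun (n : nat) := {ffun 'I_n -> bool} -> bool.

(* A partition of [r] into pairwise disjoint (possibly empty) sets X_1..X_s, Z_0, Z_1
   is encoded as a map sigma : 'I_r -> 'I_s + bool :
   sigma i = inl j  <-> i \in X_j ;  sigma i = inr b  <-> i \in Z_b. *)
Definition substitute (r s : nat) (sigma : 'I_r -> 'I_s + bool)
  (x : {ffun 'I_s -> bool}) : {ffun 'I_r -> bool} :=
  [ffun i => match sigma i with inl j => x j | inr b => b end].

Definition is_restriction (r s : nat) (g : boolfun s) (f : boolfun r) : Prop :=
  exists sigma : 'I_r -> 'I_s + bool,
    forall x : {ffun 'I_s -> bool}, g x = f (substitute sigma x).

(* g is a 0-restriction of f : as above with Z_1 empty *)
Definition is_0_restriction (r s : nat) (g : boolfun s) (f : boolfun r) : Prop :=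
  exists sigma : 'I_r -> 'I_s + bool,
    (forall i, sigma i <> inr true) /\
    forall x : {ffun 'I_s -> bool}, g x = f (substitute sigma x).

Definition IMPL : boolfun 2 :=
  fun x => ~~ x ord0 || x (@Ordinal 2 1 isT).

(* Main.v *)
Require Import Defs.
From mathcomp Require Import all_boot.

Definition o1 : 'I_2 := @Ordinal 2 1 isT.
Definition mk (a b : bool) : {ffun 'I_2 -> bool} := [ffun i => if i == ord0 then a else b].

Lemma I2_cases (j : 'I_2) : j = ord0 \/ j = o1.
Proof. case: j => [[|[|k]] Hk]; [left; exact: val_inj | right; exact: val_inj | by []]. Qed.

Lemma mk_eta (x : {ffun 'I_2 -> bool}) : x = mk (x ord0) (x o1).
Proof. apply/ffunP => i; rewrite ffunE; by case: (I2_cases i) => ->. Qed.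

Lemma IMPL_mk a b : IMPL (mk a b) = ~~ a || b.
Proof. by rewrite /IMPL !ffunE. Qed.

Theorem mainTheorem13 (r : nat) (f : boolfun r) :
  f [ffun => false] = true ->
  is_restriction IMPL f -> is_0_restriction IMPL f.
Proof.
move=> f0 [sigma H].
have Hm : forall a b, f (substitute sigma (mk a b)) = ~~ a || b.
  by move=> a b; rewrite -H IMPL_mk.
set B : {ffun 'I_r -> bool} := [ffun i => sigma i == inl o1].
case fB: (f B).
- exists (fun i => match sigma i with inr true => inl ord0 | s => s end); split.
    by move=> i; case: (sigma i) => [j|[]].
  move=> x; rewrite (mk_eta x) IMPL_mk.
  case: (x ord0) (x o1) => [] [].
  + transitivity (f (substitute sigma (mk true true))); first by rewrite Hm. congr f; apply/ffunP => i; rewrite !ffunE.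
    by case: (sigma i) => [j|[]] /=; try case: (I2_cases j) => ->; rewrite /= ?ffunE.
  + transitivity (f (substitute sigma (mk true false))); first by rewrite Hm. congr f; apply/ffunP => i; rewrite !ffunE.
    by case: (sigma i) => [j|[]] /=; try case: (I2_cases j) => ->; rewrite /= ?ffunE.
  + transitivity (f B); first by rewrite fB. congr f; apply/ffunP => i; rewrite !ffunE.
    by case: (sigma i) => [j|[]] /=; try case: (I2_cases j) => ->; rewrite /= ?ffunE.
  + transitivity (f [ffun=> false]); first by rewrite f0. congr f; apply/ffunP => i; rewrite !ffunE.
    by case: (sigma i) => [j|[]] /=; try case: (I2_cases j) => ->; rewrite /= ?ffunE.
- exists (fun i => match sigma i with inl j => if j == ord0 then inr false else inl ord0
                   | inr true => inl o1 | inr false => inr false end); split.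
    by move=> i; case: (sigma i) => [j|[]] //; case: (j == ord0).
  move=> x; rewrite (mk_eta x) IMPL_mk.
  case: (x ord0) (x o1) => [] [].
  + transitivity (f (substitute sigma (mk false true))); first by rewrite Hm. congr f; apply/ffunP => i; rewrite !ffunE.
    by case: (sigma i) => [j|[]] /=; try case: (I2_cases j) => ->; rewrite /= ?ffunE.
  + transitivity (f B); first by rewrite fB. congr f; apply/ffunP => i; rewrite !ffunE.
    by case: (sigma i) => [j|[]] /=; try case: (I2_cases j) => ->; rewrite /= ?ffunE.
  + transitivity (f (substitute sigma (mk false false))); first by rewrite Hm. congr f; apply/ffunP => i; rewrite !ffunE.
    by case: (sigma i) => [j|[]] /=; try case: (I2_cases j) => ->; rewrite /= ?ffunE.
  + transitivity (f [ffun=> false]); first by rewrite f0. congr f; apply/ffunP => i; rewrite !ffunE.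
    by case: (sigma i) => [j|[]] /=; try case: (I2_cases j) => ->; rewrite /= ?ffunE.
Qed.
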